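(* For every ultimately periodic trace $\pi$, $\mathrm{cct}(\pi)$ is a complete consistent theory of LTL, and the map $\mathrm{cct}:\mathrm{UP}\to\mathrm{CCT}_{LTL}$ is a bijection.
   Context: Fix a finite nonempty $AP$. LTL formulae: $\varphi::=\bot\mid p\mid\neg\varphi\mid\varphi\lor\varphi\mid X\varphi\mid\varphi U\varphi$. Traces $\pi=a_0a_1\dots$ ($a_i\subseteq AP$), $\pi^i=a_ia_{i+1}\dots$; $\pi\models p$ iff $p\in a_0$, $\pi\models X\varphi$ iff $\pi^1\models\varphi$, $\pi\models\varphi U\psi$ iff $\exists i\ge0$: $\pi^i\models\psi$ and $\forall j<i$: $\pi^j\models\varphi$; $\bot,\neg,\lor$ as usual. Kripke structure $M=(S,I,T,\lambda)$: finite $S$, nonempty $I\subseteq S$, left-total $T\subseteq S\times S$, $\lambda:S\to2^{AP}$; traces of $M$: $\lambda(s_0)\lambda(s_1)\dots$ with $s_0\in I$, $(s_i,s_{i+1})\in T$. $M\models\varphi$ iff all its traces satisfy $\varphi$. $\mathrm{Cn}_{LTL}(X)$ = formulae satisfied by every Kripke structure satisfying $X$. Theory: $K=\mathrm{Cn}_{LTL}(K)$; consistent: $K$ is not the set of all formulae; complete: $\varphi\in K$ or $\neg\varphi\in K$ for every $\varphi$; $\mathrm{CCT}_{LTL}$ is the set of complete consistent LTL theories. $\mathrm{UP}$ is the set of ultimately periodic traces $\rho\sigma^\omega$ ($\rho,\sigma$ finite, $\sigma$ nonempty); $\mathrm{cct}(\pi):=\{\varphi\mid\pi\models\varphi\}$.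 *)

(* Defs.v *)
From mathcomp Require Import all_boot.
Set Implicit Arguments. Unset Strict Implicit. Unset Printing Implicit Defensive.

Section LTL.
Variable AP : finType.

Inductive form : Type :=
| FBot : form
| FVar : AP -> form
| FNeg : form -> form
| FOr  : form -> form -> form
| FX   : form -> form
| FU   : form -> form -> form.

Definition trace := nat -> {set AP}.

Definition suffix (pi : trace) (i : nat) : trace := fun k => pi (i + k).

Fixpoint sat (pi : trace) (phi : form) : Prop :=
  match phi with
  | FBot => False
  | FVar p => p \in pi 0
  | FNeg f => ~ sat pi f
  | FOr f g => sat pi f \/ sat pi g
  | FX f => sat (suffix pi 1) f
  | FU f g => exists i, sat (suffix pi i) g /\ forall j, j < i -> sat (suffix pi j) f
  end.

Unset Implicit Arguments.
Record kripke := Kripke {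
  kS : finType;
  kI : {set kS};
  kT : rel kS;
  kL : kS -> {set AP};
  kI_nonempty : kI != set0;
  kT_total : forall s, exists s', kT s s'
}.
Set Implicit Arguments.

Definition is_trace_of (M : kripke) (pi : trace) : Prop :=
  exists s : nat -> kS M,
    [/\ s 0 \in kI M, (forall i, kT M (s i) (s i.+1)) & (forall i, pi i = kL M (s i))].

Definition kmodels (M : kripke) (phi : form) : Prop :=
  forall pi, is_trace_of M pi -> sat pi phi.

Definition fset_ := form -> Prop.

Definition Cn (X : fset_) : fset_ :=
  fun phi => forall M : kripke, (forall psi, X psi -> kmodels M psi) -> kmodels M phi.

Definition is_theory (K : fset_) : Prop := forall phi, K phi <-> Cn K phi.
Definition consistent (K : fset_) : Prop := exists phi, ~ K phi.
Definition complete (K : fset_) : Prop := forall phi, K phi \/ K (FNeg phi).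

Definition CCT (K : fset_) : Prop := [/\ is_theory K, consistent K & complete K].

Definition omega_word (rho sigma : seq {set AP}) : trace :=
  fun i => if i < size rho then nth set0 rho i
           else nth set0 sigma ((i - size rho) %% size sigma).

Definition UP (pi : trace) : Prop :=
  exists (rho sigma : seq {set AP}), size sigma > 0 /\ forall i, pi i = omega_word rho sigma i.

Definition cct (pi : trace) : fset_ := fun phi => sat pi phi.

End LTL.

(* Main.v *)
Require Import Defs.
From mathcomp Require Import all_boot zify.
From Stdlib Require Import Classical FunctionalExtensionality.

Lemma sat_ext (AP : finType) (p1 p2 : trace AP) phi :
  (forall i, p1 i = p2 i) -> sat p1 phi -> sat p2 phi.
Proof.
move=> H; have -> : p1 = p2 by apply: functional_extensionality.
done.
Qed.

Lemma suffixK (AP : finType) (pi : trace AP) i j :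
  Defs.suffix (Defs.suffix pi i) j = Defs.suffix pi (i + j).
Proof. apply: functional_extensionality => k; rewrite /Defs.suffix addnA. done. Qed.

Lemma sat_Xn (AP : finType) i (pi : trace AP) f :
  sat pi (iter i (@FX AP) f) <-> sat (Defs.suffix pi i) f.
Proof.
elim: i pi => [|i IH] pi /=.
  have -> : Defs.suffix pi 0 = pi by apply: functional_extensionality.
  done.
rewrite IH suffixK add1n. done.
Qed.

Lemma periodic_iter {AP : finType} {tr : trace AP} {m p : nat} :
  (forall k, m <= k -> tr (k + p) = tr k) ->
  forall q k, m <= k -> tr (k + q * p) = tr k.
Proof.
move=> H; elim=> [|q IH] k hk; first by rewrite mul0n addn0.
rewrite mulSn addnA IH; [exact: H | lia].
Qed.

Lemma periodic_UP (AP : finType) (pi : trace AP) m p : 0 < p ->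
  (forall k, m <= k -> pi (k + p) = pi k) -> UP pi.
Proof.
move=> hp H.
exists (mkseq pi m), (mkseq (fun j => pi (m + j)) p); split; first by rewrite size_mkseq.
move=> i; rewrite /omega_word !size_mkseq.
case: ifP => hi; first by rewrite nth_mkseq.
rewrite nth_mkseq ?ltn_pmod //.
have E : i = (m + (i - m) %% p) + (i - m) %/ p * p.
  have := divn_eq (i - m) p; move/negbT: hi; lia.
by rewrite {1}E (periodic_iter H) //; lia.
Qed.

Definition nxt (n r : nat) (k : 'I_n.+1) : 'I_n.+1 :=
  if k < n then inord k.+1 else inord r.

Lemma lasso_kripke (AP : finType) (pi : trace AP) r n : r <= n ->
  (forall j, r <= j -> pi (j + (n.+1 - r)) = pi j) ->
  exists M : kripke AP, is_trace_of M pi /\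
    forall pi', is_trace_of M pi' -> forall i, pi' i = pi i.
Proof.
move=> hr Hp.
have I0 : [set (ord0 : 'I_n.+1)] != set0.
  by apply/set0Pn; exists ord0; rewrite set11.
have T0 : forall s : 'I_n.+1, exists s', (fun a b => b == nxt n r a) s s'.
  by move=> s; exists (nxt n r s).
pose M := @Kripke AP _ [set ord0] (fun a b => b == nxt n r a) (fun k => pi (nat_of_ord k)) I0 T0.
pose st i := iter i (nxt n r) ord0.
have Inv : forall i k, pi (nat_of_ord (st i) + k) = pi (i + k).
  elim=> [|i IH] k; first by rewrite /st /= add0n.
  rewrite /st iterS -/(st i) /nxt.
  case: ifP => hx.
    rewrite inordK; last by lia.
    by rewrite addSnnS IH addSnnS.
  have hxn : nat_of_ord (st i) = n by have := ltn_ord (st i); move/negbT: hx; lia.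
  rewrite inordK; last by lia.
  rewrite addSnnS; have := IH k.+1; rewrite hxn => <-.
  rewrite -Hp; last by lia.
  congr (pi _); lia.
have Hst : forall i, pi (nat_of_ord (st i)) = pi i.
  by move=> i; have := Inv i 0; rewrite !addn0.
exists M; split.
  exists st; split => //=; first by rewrite in_set1.
move=> pi' [s [s0 sT sL]] i.
have E : forall i, s i = st i.
  elim=> [|j IH]; first by move: s0; rewrite in_set1 => /eqP.
  by have := sT j; rewrite /= IH => /eqP.
by rewrite sL /= E Hst.
Qed.

Lemma kripke_UP (AP : finType) (M : kripke AP) :
  exists pi, UP pi /\ is_trace_of M pi.
Proof.
have [s0 hs0] := set0Pn _ (kI_nonempty _ M).
pose f s := xchoose (kT_total _ M s).
pose a i := iter i f s0.
have [m [p [hp E]]] : exists m p, 0 < p /\ a (m + p) = a m.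
  pose g (i : 'I_#|kS _ M|.+1) := a i.
  have : ~ injective g.
    move=> /leq_card; rewrite card_ord; lia.
  move=> /not_all_ex_not [x]; move=> /not_all_ex_not [y] H; have [hxy nxy] := imply_to_and _ _ H.
  have: (x : nat) != y by apply/negP => /eqP/val_inj.
  rewrite neq_ltn => /orP [] h.
    by exists x, (y - x); split; [lia | rewrite subnKC ?(ltnW h)].
  by exists y, (x - y); split; [lia | rewrite subnKC ?(ltnW h)].
have Hp : forall k, m <= k -> a (k + p) = a k.
  move=> k hk; have -> : k + p = (k - m) + (m + p) by lia.
  rewrite /a iterD -/(a (m + p)) E /a -iterD subnK //.
exists (fun i => kL _ M (a i)); split.
  by apply: (@periodic_UP _ _ m p hp) => k hk /=; rewrite Hp.
exists a; split => // i; rewrite /a iterS; exact: xchooseP.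
Qed.

Theorem mainTheorem11 (AP : finType) (hAP : 0 < #|AP|) :
  (* cct maps UP into CCT_LTL *)
  (forall pi : trace AP, UP pi -> CCT (cct pi)) /\
  (* injective on UP (traces compared pointwise, theories extensionally) *)
  (forall pi1 pi2 : trace AP, UP pi1 -> UP pi2 ->
     (forall phi, cct pi1 phi <-> cct pi2 phi) -> forall i, pi1 i = pi2 i) /\
  (* surjective onto CCT_LTL *)
  (forall K : fset_ AP, CCT K -> exists pi, UP pi /\ forall phi, K phi <-> cct pi phi).
Proof.
split; [|split].
- move=> pi [rho [sigma [hs Hw]]].
  set r := size rho; set s := size sigma.
  have Hper : forall j, r <= j -> pi (j + ((r + s).-1.+1 - r)) = pi j.
    move=> j hj; rewrite prednK; last by lia.
    rewrite !Hw /omega_word -/r -/s.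
    have -> : (j + (r + s - r) < r) = false by apply/negbTE; lia.
    have -> : (j < r) = false by apply/negbTE; lia.
    have -> : j + (r + s - r) - r = (j - r) + s by lia.
    by rewrite modnDr.
  have [M [trM Hu]] := @lasso_kripke AP pi r (r + s).-1 ltac:(lia) Hper.
  split.
  + move=> phi; split; first by move=> h M' HM; exact: HM.
    move=> HC; apply: (HC M) trM => psi hpsi pi' tr.
    apply: (@sat_ext AP pi) hpsi => i; exact: esym (Hu _ tr i).
  + by exists (FBot AP).
  + by move=> phi; apply: classic.
- move=> pi1 pi2 _ _ H i; apply/setP => x.
  have := H (iter i (@FX AP) (FVar x)); rewrite /cct !sat_Xn /= /Defs.suffix !addn0.
  by move=> [h1 h2]; apply/idP/idP.
- move=> K [Th [phi0 nK] Cp].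
  have : ~ Cn K phi0 by rewrite -Th.
  move=> /not_all_ex_not [M H]; have [HM nM] := imply_to_and _ _ H.
  have [pi [UPpi trpi]] := kripke_UP _ M.
  exists pi; split => // phi; split; first by move=> Kphi; exact: HM _ Kphi pi trpi.
  move=> hs; case: (Cp phi) => // Kn; exfalso.
  by have := HM _ Kn pi trpi.
Qed.
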